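(* If a Moksha-Patam board has no chute-barrier (i.e. there is no cell $c$ such that $c,c+1,\dots,c+5$ are all entrances of chutes), then the board is ultimately winnable: starting from cell $1$, the chain reaches cell $100$ with probability $1$.
   Context: A Moksha-Patam board consists of the cells $1,\dots,100$ together with a finite set of components; a component is an ordered pair $(a,b)$ of distinct cells, $a$ being its entrance and $b$ its exit; it is a ladder if $a<b$ and a chute if $a>b$. Conventions: distinct components have distinct entrances; no cell is both an entrance and an exit; cells $1$ and $100$ are neither entrances nor exits (components may share exits). The associated Markov chain has state space $\{1,\dots,100\}$ and transition probabilities defined as follows: $p_{100,100}=1$; for $i<100$ and each die value $d\in\{1,\dots,6\}$ (each with probability $1/6$), if $i+d>100$ the chain stays at $i$; otherwise, with $j=i+d$, the chain moves to $b$ if $j$ is the entrance of a component $(j,b)$ and to $j$ otherwise. The game starts at state $1$. The board is ultimately winnable if the chain started at $1$ reaches $100$ with probability $1$. A chute-barrier is a collection of six or more chutes whose entrances are consecutive cells. *)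

(* Defs.v *)
(* probabilities are rationals (all transition probabilities are
   multiples of 1/6). *)
From mathcomp Require Import all_boot all_order all_algebra.
Set Implicit Arguments. Unset Strict Implicit. Unset Printing Implicit Defensive.
Import Order.TTheory GRing.Theory Num.Theory.

Definition board := seq (nat * nat).

Definition is_cell (c : nat) : bool := (1 <= c <= 100)%N.

Definition entrances (B : board) : seq nat := map fst B.
Definition exits (B : board) : seq nat := map snd B.

Definition is_ladder (e : nat * nat) : bool := (e.1 < e.2)%N.
Definition is_chute (e : nat * nat) : bool := (e.2 < e.1)%N.

Definition valid_board (B : board) : Prop :=
  [/\ (forall e, e \in B -> [/\ is_cell e.1, is_cell e.2 & e.1 != e.2]),
      uniq (entrances B),
      (forall c, c \in entrances B -> c \notin exits B),
      (1 \notin entrances B) /\ (1 \notin exits B) &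
      (100 \notin entrances B) /\ (100 \notin exits B)].

Definition follow (B : board) (j : nat) : nat :=
  if has (fun e : nat * nat => e.1 == j) B
  then (nth (0, 0) B (find (fun e : nat * nat => e.1 == j) B)).2
  else j.

Definition dest (B : board) (i d : nat) : nat :=
  if (100 < i + d)%N then i else follow B (i + d).

Local Open Scope ring_scope.

Definition trans (B : board) (i k : nat) : rat :=
  if i == 100%N then (k == 100%N)%:R
  else (\sum_(1 <= d < 7) ((dest B i d == k)%:R : rat)) / 6%:R.

(* hit B n i = probability that the chain started at i is at 100 at time n,
   i.e. (P^n)_{i,100}; since 100 is absorbing this is the probability of
   reaching 100 within n steps. *)
Fixpoint hit (B : board) (n i : nat) : rat :=
  match n with
  | 0 => (i == 100%N)%:R
  | n'.+1 => \sum_(1 <= k < 101) trans B i k * hit B n' k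
  end.

Definition ultimately_winnable (B : board) : Prop :=
  forall eps : rat, 0 < eps ->
    exists N : nat, forall n : nat, (N <= n)%N -> `|1 - hit B n 1| < eps.

Definition has_chute_barrier (B : board) : Prop :=
  exists c : nat, forall k : nat, (k < 6)%N ->
    exists e, e \in B /\ e.1 = (c + k)%N /\ is_chute e.

(* Main.v *)
Require Import Defs.
From mathcomp Require Import all_boot all_order all_algebra.
From mathcomp Require Import zify ring lra.
Import Order.TTheory GRing.Theory Num.Theory.
Set Implicit Arguments. Unset Strict Implicit.
Local Open Scope ring_scope.

Lemma sum_ind (h : nat -> rat) x : (1 <= x < 101)%N ->
  \sum_(1 <= k < 101) ((x == k)%:R * h k) = h x.
Proof.
move=> Hx.
rewrite (bigD1_seq x); [|by rewrite mem_index_iota|by apply: iota_uniq].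
rewrite big1; last by move=> k; rewrite eq_sym => /negbTE ->; rewrite mul0r.
by rewrite eqxx mul1r; apply: addr0.
Qed.

Lemma sum6 (F : nat -> rat) :
  \sum_(1 <= d < 7) F d = F 1%N + F 2%N + F 3%N + F 4%N + F 5%N + F 6%N.
Proof. rewrite big_ltn // big_ltn // big_ltn // big_ltn // big_ltn // big_ltn // big_geq //. rewrite !addrA; by apply: addr0. Qed.

Lemma hit100 B n : hit B n 100 = 1.
Proof.
elim: n => [|n IH]; first by [].
rewrite [hit _ _ _]/= /trans eqxx.
under eq_bigr do rewrite eq_sym.
by rewrite sum_ind.
Qed.

Lemma follow_has B j : has (fun e : nat * nat => e.1 == j) B ->
  let e := nth (0, 0) B (find (fun e : nat * nat => e.1 == j) B) in
  e \in B /\ e.1 = j.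
Proof.
move=> H /=; split; first by apply: mem_nth; rewrite -has_find.
by apply/eqP; exact: (nth_find (0,0) H).
Qed.

Lemma dest_cell B i d : valid_board B -> is_cell i -> (1 <= d)%N ->
  is_cell (dest B i d).
Proof.
case=> Hc _ _ _ _ Hi Hd; rewrite /dest; case: ifP => // H.
rewrite /follow; case: ifP => Hh.
  have [Hm _] := follow_has Hh.
  by have [] := Hc _ Hm.
move: Hi H; rewrite /is_cell; lia.
Qed.

Lemma good_d B i : valid_board B -> ~ has_chute_barrier B -> is_cell i -> i != 100%N ->
  exists2 d, (1 <= d < 7)%N & (i < dest B i d)%N.
Proof.
move=> V; case: (V) => Hc _ _ _ [H100 _] NB Hi Hn.
have Hi' : (i < 100)%N by move: Hi Hn; rewrite /is_cell; lia.
case: (leqP 94 i) => Hle.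
  exists (100 - i)%N; first lia.
  rewrite /dest ifF; last lia.
  have -> : (i + (100 - i) = 100)%N by lia.
  rewrite /follow; case: ifP => Hh //.
  have [Hm He] := follow_has Hh.
  exfalso; move/negP: H100; apply; rewrite -He; exact: map_f.
have : ~~ [forall k : 'I_6, has (fun e : nat * nat => (e.1 == i.+1 + k)%N && is_chute e) B].
  apply/negP => /forallP H; apply: NB; exists i.+1 => k hk.
  have := H (Ordinal hk); case/hasP => e eB /andP[/eqP ? ?]; by exists e.
case/forallPn => k /hasPn Hk.
exists k.+1; first by have := ltn_ord k; lia.
rewrite /dest ifF; last by have := ltn_ord k; lia.
rewrite /follow; case: ifP => Hh; last lia.
have [Hm He] := follow_has Hh.
set e := nth _ _ _ in Hm He *.
have := Hk e Hm; have [_ _ Hne] := Hc e Hm.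
rewrite /is_chute He; move: Hne; rewrite He.
have -> : (i.+1 + k = i + k.+1)%N by lia.
rewrite eqxx /=; lia.
Qed.

Definition f B n i := 1 - hit B n i.

Lemma f100 B n : f B n 100 = 0.
Proof. by rewrite /f hit100 subrr. Qed.

Lemma fS B n i : valid_board B -> is_cell i -> i != 100%N ->
  f B n.+1 i = (\sum_(1 <= d < 7) f B n (dest B i d)) / 6%:R.
Proof.
move=> V Hi Hn; rewrite /f.
have -> : hit B n.+1 i = (\sum_(1 <= d < 7) hit B n (dest B i d)) / 6%:R.
  rewrite [hit _ n.+1 _]/= /trans (negbTE Hn).
  under eq_bigr do rewrite mulrAC.
  rewrite -mulr_suml.
  under eq_bigr do rewrite big_distrl.
  rewrite exchange_big.
  congr (_ / _); apply: eq_big_nat => d /andP[Hd _].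
  have := dest_cell V Hi Hd; rewrite /is_cell => Hc.
  rewrite sum_ind //; lia.
rewrite !sum6; lra.
Qed.

Lemma f_range B n i : valid_board B -> is_cell i -> 0 <= f B n i <= 1.
Proof.
move=> V; elim: n i => [|n IH] i Hi.
  by rewrite /f /=; case: (i == 100%N) => /=; rewrite ?subrr ?subr0 ?ler01 ?lexx.
case: (eqVneq i 100%N) => [->|Hn]; first by rewrite f100 lexx ler01.
rewrite fS // sum6.
have H := fun d (hd : (0 < d)%N) => IH _ (@dest_cell B i d V Hi hd).
move: (H 1%N isT) (H 2%N isT) (H 3%N isT) (H 4%N isT) (H 5%N isT) (H 6%N isT).
move=> /andP[? ?] /andP[? ?] /andP[? ?] /andP[? ?] /andP[? ?] /andP[? ?].
apply/andP; split; lra.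
Qed.

Lemma f_mono B n M : valid_board B -> 0 <= M ->
  (forall i, is_cell i -> f B n i <= M) -> forall i, is_cell i -> f B n.+1 i <= M.
Proof.
move=> V HM H i Hi.
case: (eqVneq i 100%N) => [->|Hn]; first by rewrite f100.
rewrite fS // sum6.
have H' := fun d (hd : (0 < d)%N) => H _ (@dest_cell B i d V Hi hd).
move: (H' 1%N isT) (H' 2%N isT) (H' 3%N isT) (H' 4%N isT) (H' 5%N isT) (H' 6%N isT).
move=> *; lra.
Qed.

Lemma f_monoN B n M : valid_board B -> 0 <= M ->
  (forall i, is_cell i -> f B n i <= M) -> forall t i, is_cell i -> f B (n + t) i <= M.
Proof.
move=> V HM H; elim=> [|t IH]; first by rewrite addn0.
rewrite addnS; exact: f_mono.
Qed.

Lemma c6 : 0 < (6%:R^-1 : rat) <= 1.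
Proof. apply/andP; split; first by rewrite invr_gt0 ltr0n. by rewrite invf_le1 // ?ltr0n // ler1n. Qed.

Lemma stepC B n M : valid_board B -> ~ has_chute_barrier B -> 0 <= M ->
  (forall i, is_cell i -> f B n i <= M) ->
  forall k i, is_cell i -> (100 - i <= k)%N -> f B (n + k) i <= (1 - (6%:R^-1) ^+ k) * M.
Proof.
move=> V NB HM H; elim=> [|k IH] i Hi Hk.
  have -> : i = 100%N by move: Hi Hk; rewrite /is_cell; lia.
  by rewrite f100 expr0 subrr mul0r.
have Hp : 0 <= (6%:R^-1 : rat) ^+ k <= 1.
  have /andP[c0 c1] := c6.
  move: (6%:R^-1 : rat) c0 c1 => c c0 c1.
  apply/andP; split; first by apply: exprn_ge0; lra.
  by apply: exprn_ile1 => //; lra.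
case: (eqVneq i 100%N) => [->|Hn].
  rewrite f100 exprS; apply: mulr_ge0 => //.
  move: Hp => /andP[? ?]; nra.
have [d0 Hd0 Hgt] := good_d V NB Hi Hn.
rewrite addnS fS // sum6.
have Hall := fun d (hd : (0 < d)%N) => f_monoN V HM H k (@dest_cell B i d V Hi hd).
have Hg0 : f B (n + k) (dest B i d0) <= (1 - (6%:R^-1) ^+ k) * M.
  apply: IH; first by apply: dest_cell V Hi _; move: Hd0; lia.
  move: Hk Hgt Hi Hn; rewrite /is_cell; lia.
move: (Hall 1%N isT) (Hall 2%N isT) (Hall 3%N isT) (Hall 4%N isT) (Hall 5%N isT) (Hall 6%N isT).
rewrite exprS.
move: Hp Hg0; set p := (6%:R^-1 : rat) ^+ k.
have -> : (1 - p) * M = M - p * M by ring.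
have -> : (1 - 6%:R^-1 * p) * M = M - (p * M) / 6%:R by field.
set pM := p * M.
have : (d0 = 1 \/ d0 = 2 \/ d0 = 3 \/ d0 = 4 \/ d0 = 5 \/ d0 = 6)%N by lia.
by case=> [->|[->|[->|[->|[->|->]]]]] => _ Hg *; lra.
Qed.


Lemma bern (x : rat) m : 0 <= x <= 1 -> (1 - x) ^+ m * (1 + m%:R * x) <= 1.
Proof.
move=> /andP[H0 H1]; elim: m => [|m IH]; first by rewrite expr0 mul0r addr0 mul1r.
rewrite exprS -natr1.
have Hy : 0 <= (1 - x) ^+ m by apply: exprn_ge0; lra.
have Hm : 0 <= (m%:R : rat) by apply: ler0n.
move: IH Hy Hm; set y := (1 - x) ^+ m; set mm := (m%:R : rat) => IH Hy Hm.
have -> : (1 - x) * y * (1 + (mm + 1) * x) = y * (1 + mm * x) - y * ((mm + 1) * x * x) by ring.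
have : 0 <= y * ((mm + 1) * x * x) by apply: mulr_ge0 => //; apply: mulr_ge0 => //; nra.
lra.
Qed.

Lemma Hdel : 0 < (6%:R^-1 : rat) ^+ 99 <= 1.
Proof.
have /andP[c0 c1] := c6.
move: (6%:R^-1 : rat) c0 c1 => c c0 c1.
apply/andP; split; first by apply: exprn_gt0.
by apply: exprn_ile1 => //; lra.
Qed.

Lemma finish B (del : rat) : valid_board B -> 0 < del <= 1 ->
  (forall m i, is_cell i -> f B (99 * m) i <= (1 - del) ^+ m) -> ultimately_winnable B.
Proof.
move=> V Hd G eps Heps.
have Hd' : 0 <= del <= 1 by move: Hd => /andP[? ?]; apply/andP; split; lra.
pose q := (eps * del)^-1.
have Hq : 0 <= q by rewrite /q invr_ge0; apply: mulr_ge0; lra.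
set m := Num.bound q.
have Hm : q < m%:R by apply: archi_boundP.
have Hed : 0 < eps * del by apply: mulr_gt0; move: Hd => /andP[? ?]; lra.
have E2 : eps * del * q = 1 by rewrite /q mulfV //; apply: lt0r_neq0.
clearbody m q.
exists (99 * m)%N => n Hn.
have -> : n = (99 * m + (n - 99 * m))%N by lia.
have H1 : is_cell 1 by [].
have Hy : 0 <= (1 - del) ^+ m by apply: exprn_ge0; lra.
have Hf := f_monoN V Hy (G m) (n - 99 * m) H1.
have /andP[Hf0 _] := f_range (99 * m + (n - 99 * m)) V H1.
rewrite -/(f B _ 1) ger0_norm //.
have Hb := bern m Hd'.
apply: (le_lt_trans Hf).
move: Hb Hy; set y := (1 - del) ^+ m => Hb Hy.
have Hmd : 1 < eps * (m%:R * del).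
  move: Hm; set mm := (m%:R : rat) => Hm.
  have : eps * del * q < eps * del * mm by rewrite ltr_pM2l.
  rewrite E2 => H; apply: (lt_le_trans H); rewrite mulrA; lra.
nra.
Qed.

Theorem mainTheorem6 (B : board) :
  valid_board B -> ~ has_chute_barrier B -> ultimately_winnable B.
Proof.
move=> V NB.
have G : forall m i, is_cell i -> f B (99 * m) i <= (1 - (6%:R^-1 : rat) ^+ 99) ^+ m.
  have /andP[d0 d1] := Hdel.
  have E : 0 <= 1 - (6%:R^-1 : rat) ^+ 99 by rewrite subr_ge0.
  elim=> [|m IH] i Hi.
    by rewrite muln0 expr0; have /andP[] := f_range 0 V Hi.
  have -> : (99 * m.+1 = 99 * m + 99)%N by lia.
  rewrite [_ ^+ m.+1]exprS.
  have Hk : (100 - i <= 99)%N by move: Hi; rewrite /is_cell; lia.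
  have S := @stepC B (99 * m) _ V NB (exprn_ge0 m E) IH 99 i Hi Hk.
  exact: S.
exact: (finish V Hdel G).
Qed.
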